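(* Let $\mathfrak{s}$ be a finite-dimensional complex solvable Lie algebra. There is a Zariski closed subset $W\subseteq\mathrm{Hom}(\mathfrak{s},\mathfrak{sl}_2)$ with $0\notin W$ such that $\mathrm{rep}(\mathfrak{s},\mathfrak{sl}_2)\subseteq\mathrm{rep}^1(\mathfrak{s},\mathfrak{sl}_2)\cup W$. In particular, $\mathrm{rep}(\mathfrak{s},\mathfrak{sl}_2)_{(0)}=\mathrm{rep}^1(\mathfrak{s},\mathfrak{sl}_2)_{(0)}$.
   Context: $\mathrm{rep}(\mathfrak{s},\mathfrak{sl}_2)\subseteq\mathrm{Hom}(\mathfrak{s},\mathfrak{sl}_2)$ is the variety of Lie algebra homomorphisms, $\mathrm{rep}^1(\mathfrak{s},\mathfrak{sl}_2)$ the subset of those of rank at most $1$, and $X_{(0)}$ the analytic germ at $0$. *)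

(* Defs.v *)
From HB Require Import structures.
From mathcomp Require Import all_boot all_order all_algebra.
From mathcomp Require Import complex reals.
From mathcomp Require Import mpoly.
Set Implicit Arguments. Unset Strict Implicit. Unset Printing Implicit Defensive.
Import Order.TTheory GRing.Theory Num.Theory.
Local Open Scope ring_scope.

(* A finite-dimensional Lie algebra of dimension n over a field K, given by
   its structure constants w.r.t. a basis e_0..e_(n-1):  c i j = [e_i, e_j],
   as a row vector of coordinates. *)
Definition lie_br (K : fieldType) (n : nat) (c : 'I_n -> 'I_n -> 'rV[K]_n)
  (u v : 'rV[K]_n) : 'rV[K]_n :=
  \sum_(i < n) \sum_(j < n) (u 0 i * v 0 j) *: c i j.

(* Lie algebra axioms (bilinearity is built in): alternating + Jacobi. *)
Definition is_lie_algebra (K : fieldType) (n : nat)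
  (c : 'I_n -> 'I_n -> 'rV[K]_n) : Prop :=
  (forall x, lie_br c x x = 0) /\
  (forall x y z, lie_br c x (lie_br c y z) + lie_br c y (lie_br c z x)
                 + lie_br c z (lie_br c x y) = 0).

(* Derived series, as row spaces (mxalgebra): D 0 = s,
   D (k+1) = [D k, D k] = span of brackets of the spanning rows of D k. *)
Fixpoint derived (K : fieldType) (n : nat) (c : 'I_n -> 'I_n -> 'rV[K]_n)
  (k : nat) : 'M[K]_n :=
  match k with
  | 0 => 1%:M
  | k'.+1 => let D := derived c k' in
      (\sum_(i < n) \sum_(j < n) <<lie_br c (row i D) (row j D)>>)%MS
  end.

Definition solvable_lie (K : fieldType) (n : nat)
  (c : 'I_n -> 'I_n -> 'rV[K]_n) : Prop :=
  exists k, \rank (derived c k) = 0%N.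

(* Hom(s, sl_2): a linear map is determined by the images phi i of the basis
   vectors; it lands in sl_2 = traceless 2x2 matrices. *)
Definition in_Hom_sl2 (K : fieldType) (n : nat) (phi : 'I_n -> 'M[K]_2) : Prop :=
  forall i, \tr (phi i) = 0.

Definition lin_ext (K : fieldType) (n : nat) (phi : 'I_n -> 'M[K]_2)
  (u : 'rV[K]_n) : 'M[K]_2 := \sum_(i < n) u 0 i *: phi i.

Definition in_rep (K : fieldType) (n : nat) (c : 'I_n -> 'I_n -> 'rV[K]_n)
  (phi : 'I_n -> 'M[K]_2) : Prop :=
  in_Hom_sl2 phi /\
  forall u v, lin_ext phi (lie_br c u v)
              = lin_ext phi u *m lin_ext phi v - lin_ext phi v *m lin_ext phi u.

Definition Hom_mx (K : fieldType) (n : nat) (phi : 'I_n -> 'M[K]_2)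
  : 'M[K]_(n, 2 * 2) := \matrix_(i < n) mxvec (phi i).

Definition hom_rank (K : fieldType) (n : nat) (phi : 'I_n -> 'M[K]_2) : nat :=
  \rank (Hom_mx phi).

Definition in_rep1 (K : fieldType) (n : nat) (c : 'I_n -> 'I_n -> 'rV[K]_n)
  (phi : 'I_n -> 'M[K]_2) : Prop :=
  in_rep c phi /\ (hom_rank phi <= 1)%N.

Definition hom_coords (K : fieldType) (n : nat) (phi : 'I_n -> 'M[K]_2)
  : 'I_(n * (2 * 2)) -> K := fun k => mxvec (Hom_mx phi) 0 k.

(* zero locus of a set S of polynomial functions in these coordinates;
   W = Hom(s,sl_2) /\ zero_locus S is a general Zariski closed subset. *)
Definition zero_locus (K : fieldType) (n : nat)
  (S : {mpoly K[n * (2 * 2)]} -> Prop) (phi : 'I_n -> 'M[K]_2) : Prop :=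
  forall p, S p -> p.@[hom_coords phi] = 0.

(* Main.v *)
Require Import Defs.
From HB Require Import structures.
From mathcomp Require Import all_boot all_order all_algebra.
From mathcomp Require Import complex reals.
From mathcomp Require Import mpoly.
From mathcomp Require Import ring.
Import Order.TTheory GRing.Theory Num.Theory.
Local Open Scope ring_scope.
Set Implicit Arguments. Unset Strict Implicit. Unset Printing Implicit Defensive.

Lemma mx2_ext (K : nzRingType) (A B : 'M[K]_2) :
  A 0 0 = B 0 0 -> A 0 1 = B 0 1 -> A 1 0 = B 1 0 -> A 1 1 = B 1 1 -> A = B.
Proof.
move=> h00 h01 h10 h11; apply/matrixP=> i j.
have e0 : forall H : (0<2)%N, Ordinal H = 0 by move=> H; apply: val_inj.
have e1 : forall H : (1<2)%N, Ordinal H = 1 by move=> H; apply: val_inj.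
by case: i => [[|[|i]] Hi] //; case: j => [[|[|j]] Hj] //; rewrite ?e0 ?e1.
Qed.

Definition adm (K : fieldType) (n : nat) (c : 'I_n -> 'I_n -> 'rV[K]_n)
  (u : 'rV[K]_n) : 'M[K]_n := \matrix_(j, k) (\sum_i u 0 i *: c i j) 0 k.

Lemma lie_brE (K : fieldType) (n : nat) (c : 'I_n -> 'I_n -> 'rV[K]_n) u v :
  lie_br c u v = v *m adm c u.
Proof.
rewrite /lie_br exchange_big mulmx_sum_row; apply: eq_bigr => j _.
have -> : row j (adm c u) = \sum_i u 0 i *: c i j by apply/rowP=> k; rewrite !mxE.
rewrite scaler_sumr; apply: eq_bigr => i _; by rewrite scalerA mulrC.
Qed.

Lemma lin_extD (K : fieldType) (n : nat) (phi : 'I_n -> 'M[K]_2) u v :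
  lin_ext phi (u + v) = lin_ext phi u + lin_ext phi v.
Proof. rewrite /lin_ext -big_split; apply: eq_bigr => i _; by rewrite mxE scalerDl. Qed.

Lemma lin_extZ (K : fieldType) (n : nat) (phi : 'I_n -> 'M[K]_2) a u :
  lin_ext phi (a *: u) = a *: lin_ext phi u.
Proof. rewrite /lin_ext scaler_sumr; apply: eq_bigr => i _; by rewrite mxE scalerA. Qed.

Lemma lin_extB (K : fieldType) (n : nat) (phi : 'I_n -> 'M[K]_2) u v :
  lin_ext phi (u - v) = lin_ext phi u - lin_ext phi v.
Proof. by rewrite lin_extD -scaleN1r lin_extZ scaleN1r. Qed.

Lemma lin_ext_delta (K : fieldType) (n : nat) (phi : 'I_n -> 'M[K]_2) i :
  lin_ext phi (delta_mx 0 i) = phi i.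
Proof.
rewrite /lin_ext (bigD1 i) //= big1 ?addr0; first by rewrite mxE !eqxx scale1r.
by move=> j /negbTE ji; rewrite mxE eqxx /=; case: eqP ji => [->|]; rewrite ?eqxx /= ?scale0r.
Qed.

Lemma tr_lin_ext (K : fieldType) (n : nat) (phi : 'I_n -> 'M[K]_2) u :
  in_Hom_sl2 phi -> \tr (lin_ext phi u) = 0.
Proof.
move=> H; rewrite /lin_ext; apply: (big_ind (fun A : 'M[K]_2 => \tr A = 0)).
- by rewrite mxtrace0.
- by move=> x y hx hy; rewrite mxtraceD hx hy addr0.
- by move=> i _; rewrite mxtraceZ H mulr0.
Qed.

Definition dd (K : fieldType) (A : 'M[K]_2) : K := - (A 0 0 * A 1 1 - A 0 1 * A 1 0).

Lemma tr2 (K : fieldType) (A : 'M[K]_2) : \tr A = A 0 0 + A 1 1.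
Proof.
rewrite /mxtrace !big_ord_recl big_ord0 addr0.
by congr (A _ _ + A _ _); apply: val_inj.
Qed.

Lemma ord2_0 : (ord0 : 'I_2) = 0. Proof. exact: val_inj. Qed.
Lemma ord2_1 : (lift ord0 (ord0 : 'I_1) : 'I_2) = 1. Proof. exact: val_inj. Qed.

Lemma ad2_id (K : fieldType) (A B : 'M[K]_2) : \tr A = 0 -> \tr B = 0 ->
  A *m (A *m B - B *m A) - (A *m B - B *m A) *m A
  = (4 * dd A) *: B - (2 * \tr (A *m B)) *: A.
Proof.
rewrite !tr2 => hA hB.
have eA : A 1 1 = - A 0 0 by apply/eqP; rewrite -subr_eq0 opprK addrC hA.
have eB : B 1 1 = - B 0 0 by apply/eqP; rewrite -subr_eq0 opprK addrC hB.
apply: mx2_ext; rewrite !mxE /dd !big_ord_recl !big_ord0 !mxE !big_ord_recl !big_ord0 /= ;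
 rewrite ?ord2_0 ?ord2_1 ?eA ?eB; ring.
Qed.

Lemma rank_prop (K : fieldType) (n : nat) (phi : 'I_n -> 'M[K]_2)
  (lam : 'I_n -> K) (A : 'M[K]_2) :
  (forall i, phi i = lam i *: A) -> (hom_rank phi <= 1)%N.
Proof.
move=> H; rewrite /hom_rank.
have -> : Hom_mx phi = (\col_i lam i) *m mxvec A.
  apply/matrixP=> i j; rewrite !mxE big_ord1 !mxE H.
  by rewrite linearZ /= mxE.
by apply: leq_trans (mxrankM_maxr _ _) (rank_leq_row _).
Qed.

Lemma rank_prop2 (K : fieldType) (n : nat) (phi : 'I_n -> 'M[K]_2)
  (A : 'M[K]_2) :
  (forall i, exists l, phi i = l *: A) -> (hom_rank phi <= 1)%N.
Proof.
move=> H; rewrite /hom_rank.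
have Hs : (Hom_mx phi <= mxvec A)%MS.
  apply/row_subP => i; have [l el] := H i.
  by rewrite /Hom_mx rowK el linearZ /= scalemx_sub ?submx_refl.
exact: leq_trans (mxrankS Hs) (rank_leq_row _).
Qed.

Lemma key (K : fieldType) (n : nat) (c : 'I_n -> 'I_n -> 'rV[K]_n)
  (phi : 'I_n -> 'M[K]_2) :
  in_rep c phi -> (1 < hom_rank phi)%N -> forall x,
  root (char_poly (adm c x *m adm c x)) (4 * dd (lin_ext phi x)).
Proof.
move=> [HH Hom] Hrk x.
set A := lin_ext phi x; set t := 4 * dd A; set M := adm c x *m adm c x.
apply/negPn/negP => Hnr.
have Hu : (M - t%:M) \in unitmx.
  rewrite -row_free_unit -kermx_eq0.
  by move: Hnr; rewrite -eigenvalue_root_char /eigenvalue /eigenspace negbK.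
suff : (hom_rank phi <= 1)%N by rewrite leqNgt Hrk.
apply: (@rank_prop _ _ _ (fun i => - (2 * \tr (A *m lin_ext phi (delta_mx 0 i *m invmx (M - t%:M))))) A).
move=> i.
set z := delta_mx 0 i *m invmx (M - t%:M).
have ez : z *m (M - t%:M) = delta_mx 0 i by rewrite /z mulmxKV.
rewrite -lin_ext_delta -ez mulmxBr mul_mx_scalar lin_extB lin_extZ.
rewrite /M mulmxA -!lie_brE !Hom -/A.
rewrite ad2_id; last by apply: tr_lin_ext.
  by rewrite -/t addrAC subrr add0r scaleNr.
by apply: tr_lin_ext.
Qed.

Lemma prop3 (K : fieldType) (a b c a' b' c' : K) :
  (a != 0) || (b != 0) || (c != 0) ->
  a * b' = a' * b -> a * c' = a' * c -> b * c' = b' * c ->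
  exists l, [/\ a' = l * a, b' = l * b & c' = l * c].
Proof.
move=> /orP [/orP [ha|hb]|hc] e1 e2 e3.
- exists (a' / a); split; first by field.
    by apply: (mulfI ha); rewrite e1; field.
  by apply: (mulfI ha); rewrite e2; field.
- exists (b' / b); split; last first.
    by apply: (mulfI hb); rewrite e3; field.
  by field.
  by apply: (mulfI hb); rewrite mulrC -e1; field.
- exists (c' / c); split; last by field.
    by apply: (mulfI hc); rewrite mulrC -e2; field.
  by apply: (mulfI hc); rewrite mulrC -e3; field.
Qed.

Lemma sq0 (K : idomainType) (x : K) : x ^+ 2 = 0 -> x = 0.
Proof. by move/eqP; rewrite expf_eq0 /= => /eqP. Qed.

Lemma minors (K : numFieldType) (a b c a' b' c' : K) :
  a ^+ 2 + b * c = 0 -> a' ^+ 2 + b' * c' = 0 -> 2 * a * a' + b * c' + b' * c = 0 ->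
  [/\ a * b' = a' * b, a * c' = a' * c & b * c' = b' * c].
Proof.
move=> E1 E2 E3.
have m1 : a * b' = a' * b.
  apply/eqP; rewrite -subr_eq0; apply/eqP; apply: sq0.
  have -> : (a * b' - a' * b) ^+ 2 = b' ^+ 2 * (a ^+ 2 + b * c) + b ^+ 2 * (a' ^+ 2 + b' * c')
     - b * b' * (2 * a * a' + b * c' + b' * c) by ring.
  by rewrite E1 E2 E3 !mulr0 !addr0 subr0.
have m2 : a * c' = a' * c.
  apply/eqP; rewrite -subr_eq0; apply/eqP; apply: sq0.
  have -> : (a * c' - a' * c) ^+ 2 = c' ^+ 2 * (a ^+ 2 + b * c) + c ^+ 2 * (a' ^+ 2 + b' * c')
     - c * c' * (2 * a * a' + b * c' + b' * c) by ring.
  by rewrite E1 E2 E3 !mulr0 !addr0 subr0.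
split => //.
apply/eqP; rewrite -subr_eq0; apply/eqP; apply: sq0.
have -> : (b * c' - b' * c) ^+ 2 = (2 * a * a' + b * c' + b' * c) ^+ 2
   - 4 * (a ^+ 2 + b * c) * (a' ^+ 2 + b' * c') + 4 * (a * b' - a' * b) * (a * c' - a' * c) by ring.
rewrite E1 E2 E3 m1 m2 !subrr; ring.
Qed.

Lemma aux3 (K : comNzRingType) (a b c a' b' c' : K) :
  -((a + a') * (-a + -a') - (b + b') * (c + c')) = 0 -> a^+2 + b*c = 0 ->
  a'^+2+b'*c' = 0 -> 2*a*a' + b*c' + b'*c = 0.
Proof.
move=> h h1 h2.
have -> : 2*a*a' + b*c' + b'*c = -((a + a') * (-a + -a') - (b + b') * (c + c'))
   - (a^+2+b*c) - (a'^+2+b'*c') by ring.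
by rewrite h h1 h2 !subr0.
Qed.

Lemma isotropic (K : numFieldType) (n : nat) (phi : 'I_n -> 'M[K]_2) :
  in_Hom_sl2 phi -> (forall i j, dd (phi i + phi j) = 0) -> (hom_rank phi <= 1)%N.
Proof.
move=> HH Hd.
have e11 : forall i, phi i 1 1 = - phi i 0 0.
  move=> i; have := HH i; rewrite tr2 => h.
  by apply/eqP; rewrite -subr_eq0 opprK addrC h.
have E1 : forall i, phi i 0 0 ^+ 2 + phi i 0 1 * phi i 1 0 = 0.
  move=> i; have := Hd i i; rewrite /dd !mxE e11 => h.
  have h4 : (4 : K) != 0 by rewrite pnatr_eq0.
  apply: (mulfI h4); rewrite mulr0 -h; ring.
have E3 : forall i j, 2 * phi i 0 0 * phi j 0 0 + phi i 0 1 * phi j 1 0 + phi j 0 1 * phi i 1 0 = 0.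
  move=> i j; have := Hd i j; rewrite /dd !mxE !e11 => h.
  exact: aux3 h (E1 i) (E1 j).
case: (pickP (fun k => phi k != 0)) => [k Hk | Hn]; last first.
  apply: (@rank_prop _ _ _ (fun _ => 1) 0) => i.
  by rewrite scale1r; apply/eqP; move: (Hn i) => /= /negbFE.
have nz : (phi k 0 0 != 0) || (phi k 0 1 != 0) || (phi k 1 0 != 0).
  apply: contraR Hk; rewrite !negb_or !negbK => /andP [/andP [/eqP h0 /eqP h1] /eqP h2].
  by apply/eqP/mx2_ext; rewrite ?mxE ?e11 ?h0 ?h1 ?h2 ?oppr0.
apply: (@rank_prop2 _ _ _ (phi k)) => i.
have [m1 m2 m3] := minors (E1 k) (E1 i) (E3 k i).
have [l [h0 h1 h2]] := prop3 nz m1 m2 m3.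
exists l; apply: mx2_ext; rewrite ?mxE ?e11 // h0; ring.
Qed.

Lemma strip (K : idomainType) (q : {poly K}) : q != 0 ->
  exists g : {poly K}, g.[0] != 0 /\ forall t, t != 0 -> root q t -> root g t.
Proof.
elim: (size q).+1 {-2}q (ltnSn (size q)) => // m IH {}q Hs Hq.
case: (eqVneq q.[0] 0) => [h0|h0]; last by exists q.
have /factor_theorem [q' eq'] : root q 0 by rewrite rootE h0.
have nq' : q' != 0 by apply: contraNneq Hq => e; rewrite eq' e mul0r.
have hs : (size q' < m)%N.
  move: Hs; rewrite eq' size_mul ?polyXsubC_eq0 // size_XsubC addn2 /=.
  by rewrite ltnS.
have [g [g0 Hg]] := IH q' hs nq'.
exists g; split => // t t0 rt; apply: Hg => //.
move: rt; rewrite eq' rootE hornerM hornerXsubC subr0 mulf_eq0 (negbTE t0) orbF.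
by [].
Qed.

Lemma near0 (K : numFieldType) (g : {poly K}) : g.[0] != 0 ->
  exists d : K, 0 < d /\ d <= 1 /\ forall t, `|t| < d -> g.[t] != 0.
Proof.
move=> g0.
have /factor_theorem [h eh] : root (g - g.[0]%:P) 0.
  by rewrite rootE hornerD hornerN hornerC subrr.
have gt : forall t, g.[t] = g.[0] + h.[t] * t.
  move=> t; have := congr1 (fun p => p.[t]) eh.
  rewrite /= hornerD hornerN hornerC hornerM hornerXsubC subr0 => <-.
  by rewrite addrC subrK.
pose C := \sum_(i < size h) `|h`_i|.
have C0 : 0 <= C by apply: sumr_ge0 => i _.
have hb : forall t, `|t| <= 1 -> `|h.[t]| <= C.
  move=> t t1; rewrite horner_coef; apply: le_trans (ler_norm_sum _ _ _) _.
  apply: ler_sum => i _; rewrite normrM normrX; apply: ler_piMr => //.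
  by apply: exprn_ile1.
have a0 : 0 < `|g.[0]| by rewrite normr_gt0.
have Ca : 0 < C + `|g.[0]| by apply: ltr_wpDl.
exists (`|g.[0]| / (C + `|g.[0]|)); split; first by apply: divr_gt0.
split; first by rewrite ler_pdivrMr // mul1r lerDr.
move=> t; rewrite ltr_pdivlMr // mulrDr => ht.
have h2 : `|t| * `|g.[0]| < `|g.[0]|.
  by apply: le_lt_trans ht; rewrite lerDr mulr_ge0.
have h3 : `|t| * C < `|g.[0]|.
  by apply: le_lt_trans ht; rewrite lerDl mulr_ge0.
have t1 : `|t| <= 1.
  by apply/ltW; move: h2; rewrite -[X in _ < X]mul1r ltr_pM2r.
apply/negP => /eqP gz.
have : `|g.[0]| <= `|t| * C.
  have -> : g.[0] = - (h.[t] * t) by apply/eqP; rewrite -subr_eq0 opprK -gt gz.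
  by rewrite normrN normrM mulrC ler_wpM2l // hb.
by move=> H; move: (le_lt_trans H h3); rewrite ltxx.
Qed.

Section Main.
Variables (K : numFieldType) (n : nat) (c : 'I_n -> 'I_n -> 'rV[K]_n).

Definition ee (i j : 'I_n) : 'rV[K]_n := delta_mx 0 i + delta_mx 0 j.
Definition Mp (p : 'I_n * 'I_n) := adm c (ee p.1 p.2) *m adm c (ee p.1 p.2).
Definition Qp : {poly K} := \prod_p char_poly (Mp p).

Lemma Qp_neq0 : Qp != 0.
Proof. by apply/prodf_neq0 => p _; apply: monic_neq0; apply: char_poly_monic. Qed.

Definition tt (phi : 'I_n -> 'M[K]_2) (p : 'I_n * 'I_n) := 4 * dd (phi p.1 + phi p.2).

Lemma factF (phi : 'I_n -> 'M[K]_2) : in_rep c phi -> (1 < hom_rank phi)%N ->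
  exists p, tt phi p != 0 /\ root Qp (tt phi p).
Proof.
move=> Hr Hrk.
case: (pickP (fun p : 'I_n * 'I_n => dd (phi p.1 + phi p.2) != 0)) => [p Hp | Hn].
  exists p; split.
    by rewrite /tt mulf_neq0 // pnatr_eq0.
  have := key Hr Hrk (ee p.1 p.2).
  rewrite /ee lin_extD !lin_ext_delta -/(Mp p) => rt.
  rewrite /Qp rootE horner_prod; apply/prodf_eq0; exists p => //.
have : (hom_rank phi <= 1)%N.
  apply: isotropic; first by case: Hr.
  by move=> i j; move: (Hn (i, j)) => /= /negbFE /eqP.
by rewrite leqNgt Hrk.
Qed.

Definition idx (i : 'I_n) (a b : 'I_2) : 'I_(n * (2 * 2)) := mxvec_index i (mxvec_index a b).

Lemma coordE (phi : 'I_n -> 'M[K]_2) i a b : hom_coords phi (idx i a b) = phi i a b.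
Proof. by rewrite /hom_coords /idx mxvecE /Hom_mx mxE mxvecE. Qed.

Definition Xm (p : 'I_n * 'I_n) (a b : 'I_2) : {mpoly K[n * (2 * 2)]} :=
  'X_(idx p.1 a b) + 'X_(idx p.2 a b).
Definition Dm p : {mpoly K[n * (2 * 2)]} :=
  (4%:R)%:MP * - (Xm p 0 0 * Xm p 1 1 - Xm p 0 1 * Xm p 1 0).
Definition Gm (G : {poly K}) p : {mpoly K[n * (2 * 2)]} :=
  \sum_(k < size G) (G`_k)%:MP * (Dm p) ^+ k.
Definition Pm G : {mpoly K[n * (2 * 2)]} := \prod_p Gm G p.

Lemma PmE G (phi : 'I_n -> 'M[K]_2) :
  (Pm G).@[hom_coords phi] = \prod_p G.[tt phi p].
Proof.
rewrite /Pm rmorph_prod; apply: eq_bigr => p _.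
rewrite /Gm rmorph_sum horner_coef; apply: eq_bigr => k _.
rewrite rmorphM rmorphXn /= mevalC; congr (_ * _ ^+ _).
rewrite /Dm mevalM mevalC mevalN mevalB !mevalM /Xm !mevalD !mevalXU !coordE.
by rewrite /tt /dd !mxE.
Qed.

End Main.

Theorem mainK (K : numFieldType) (n : nat) (c : 'I_n -> 'I_n -> 'rV[K]_n) :
  (exists S : {mpoly K[n * (2 * 2)]} -> Prop,
     ~ zero_locus S (fun _ : 'I_n => (0 : 'M[K]_2)) /\
     (forall phi : 'I_n -> 'M[K]_2,
        in_rep c phi -> in_rep1 c phi \/ (in_Hom_sl2 phi /\ zero_locus S phi)))
  /\
  (exists eps : K, 0 < eps /\
     forall phi : 'I_n -> 'M[K]_2,
       (forall i a b, `|phi i a b| < eps) ->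
       (in_rep c phi <-> in_rep1 c phi)).
Proof.
have [G [G0 HG]] := strip (Qp_neq0 c).
have bad : forall phi, in_rep c phi -> (1 < hom_rank phi)%N ->
    exists p, tt phi p != 0 /\ root G (tt phi p).
  move=> phi Hr Hrk; have [p [t0 rt]] := factF Hr Hrk.
  by exists p; split => //; apply: HG.
split.
  pose S (P : {mpoly K[n * (2 * 2)]}) := forall phi, in_rep c phi ->
     (1 < hom_rank phi)%N -> P.@[hom_coords phi] = 0.
  exists S; split.
    move=> HZ; have := HZ (Pm n G).
    have HS : S (Pm n G).
      move=> phi Hr Hrk; rewrite PmE; have [p [_ rt]] := bad phi Hr Hrk.
      by apply/eqP/prodf_eq0; exists p.
    move=> /(_ HS); rewrite PmE => /eqP; apply/negP/prodf_neq0 => p _.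
    by rewrite /tt /dd !mxE !addr0 !mulr0 subr0 oppr0 mulr0.
  move=> phi Hr; case: (leqP (hom_rank phi) 1) => Hrk.
    by left.
  right; split; first by case: Hr.
  by move=> P HP; apply: HP.
have [d [d0 [d1 Hd]]] := near0 G0.
exists (d / 32%:R).
have h32 : (0 : K) < 32%:R by rewrite ltr0n.
split; first by apply: divr_gt0.
move=> phi Hsm; split; last by case.
move=> Hr; split => //; case: (leqP (hom_rank phi) 1) => // Hrk.
have [p [t0 rt]] := bad phi Hr Hrk.
suff ht : `|tt phi p| < d by move: (Hd _ ht); rewrite -[_ != 0]/(~~ root G _) rt.
set e := d / 32%:R.
have e1 : e < 1.
  rewrite /e ltr_pdivrMr // mul1r; apply: le_lt_trans d1 _.
  by rewrite ltr1n.
have e0 : 0 <= e by apply/ltW/divr_gt0.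
have bA : forall a b, `|(phi p.1 + phi p.2) a b| <= 2%:R * e.
  move=> a b; rewrite mxE; apply: le_trans (ler_normD _ _) _.
  by rewrite mulr2n mulrDl mul1r lerD // ltW.
have bAA : forall a b a' b', `|(phi p.1 + phi p.2) a b * (phi p.1 + phi p.2) a' b'|
   <= 2%:R * e * (2%:R * e).
  by move=> a b a' b'; rewrite normrM ler_pM.
have : `|tt phi p| <= 4%:R * (2%:R * e * (2%:R * e) + 2%:R * e * (2%:R * e)).
  rewrite /tt /dd normrM normrN ger0_norm ?ler0n //.
  rewrite ler_pM2l ?ltr0n //; apply: le_trans (ler_normB _ _) _.
  by apply: lerD.
have -> : 4%:R * (2%:R * e * (2%:R * e) + 2%:R * e * (2%:R * e)) = d * e.
  by rewrite /e; field.
move=> Hb; apply: le_lt_trans Hb _.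
have lt1 : d * e < d * 1 by rewrite ltr_pM2l.
by rewrite mulr1 in lt1.
Qed.

Theorem lemma4p3 (R : realType) (n : nat) (c : 'I_n -> 'I_n -> 'rV[R[i]]_n)
  (Hlie : is_lie_algebra c) (Hsolv : solvable_lie c) :
  (exists S : {mpoly R[i][n * (2 * 2)]} -> Prop,
     ~ zero_locus S (fun _ : 'I_n => (0 : 'M[R[i]]_2)) /\
     (forall phi : 'I_n -> 'M[R[i]]_2,
        in_rep c phi -> in_rep1 c phi \/ (in_Hom_sl2 phi /\ zero_locus S phi)))
  /\
  (exists eps : R[i], 0 < eps /\
     forall phi : 'I_n -> 'M[R[i]]_2,
       (forall i a b, `|phi i a b| < eps) ->
       (in_rep c phi <-> in_rep1 c phi)).
Proof. exact: mainK. Qed.
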